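(* Let $\rho_0,\rho_1,\dots,\rho_n$ be density matrices on a finite-dimensional complex Hilbert space with $\rho_j\rho_0=\rho_0\rho_j=0$ for all $j=1,\dots,n$. Let $p_1,\dots,p_n\ge0$ with $\sum_j p_j=1$, $\epsilon\in[0,1]$, $\sigma_j=\epsilon\rho_0+(1-\epsilon)\rho_j$, $\rho=\sum_j p_j\rho_j$ and $\sigma=\sum_j p_j\sigma_j$. Suppose $\operatorname{tr}(\rho_j^2)\ge\operatorname{tr}(\sigma_j^2)$ for all $j$ and $\operatorname{tr}(\rho^2)\ge\operatorname{tr}(\sigma^2)$. Then $$\sum_{j=1}^n p_j\,\mathcal{F}_2(\rho_j,\sigma_j)=\mathcal{F}_2(\rho,\sigma)=1-\epsilon,$$ where $\mathcal{F}_2(\alpha,\beta)=\operatorname{tr}(\alpha\beta)/\max[\operatorname{tr}(\alpha^2),\operatorname{tr}(\beta^2)]$.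
   Context: A density matrix is a positive semidefinite operator of unit trace. *)

(* Defs.v *)
From HB Require Import structures.
From mathcomp Require Import all_boot all_order all_algebra.
Set Implicit Arguments. Unset Strict Implicit. Unset Printing Implicit Defensive.
Import Order.TTheory GRing.Theory Num.Theory.
Local Open Scope ring_scope.

(* Finite-dimensional complex Hilbert space: C^d with C any numClosedFieldType
   (e.g. algC or R[i] for a real closed field R), standard inner product. *)

Definition adjmx (C : numClosedFieldType) (m n : nat) (A : 'M[C]_(m, n)) : 'M[C]_(n, m) :=
  (map_mx Num.conj A)^T.

Definition psd (C : numClosedFieldType) (d : nat) (A : 'M[C]_d) : Prop :=
  forall x : 'cV[C]_d, 0 <= (adjmx x *m A *m x) 0 0.

Definition density (C : numClosedFieldType) (d : nat) (A : 'M[C]_d) : Prop :=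
  psd A /\ \tr A = 1.

Definition F2 (C : numClosedFieldType) (d : nat) (a b : 'M[C]_d) : C :=
  let ta := \tr (a *m a) in
  let tb := \tr (b *m b) in
  \tr (a *m b) / (if ta < tb then tb else ta).

(* Main.v *)
Require Import Defs.
From HB Require Import structures.
From mathcomp Require Import all_boot all_order all_algebra.
From mathcomp Require Import ring.
Import Order.TTheory GRing.Theory Num.Theory.
Local Open Scope ring_scope.

Section H.
Variable C : numClosedFieldType.
Variable d : nat.
Local Notation e i := (delta_mx i 0 : 'cV[C]_d).

Lemma adjmxD (x y : 'cV[C]_d) : adjmx (x + y) = adjmx x + adjmx y.
Proof. by apply/matrixP => a b; rewrite !mxE rmorphD. Qed.

Lemma adjmxZ (c : C) (x : 'cV[C]_d) : adjmx (c *: x) = c^* *: adjmx x.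
Proof. by apply/matrixP => a b; rewrite !mxE rmorphM. Qed.

Lemma adjmx_e (i : 'I_d) : adjmx (delta_mx i 0 : 'cV[C]_d) = delta_mx 0 i.
Proof. by apply/matrixP => a b; rewrite !mxE rmorph_nat andbC. Qed.

Lemma quad_e (A : 'M[C]_d) i k :
  (adjmx (delta_mx i 0 : 'cV[C]_d) *m A *m (delta_mx k 0 : 'cV[C]_d)) 0 0 = A i k.
Proof. by rewrite adjmx_e -rowE -colE !mxE. Qed.

Lemma quad_lin (A : 'M[C]_d) i k (c : C) :
  (adjmx (e i + c *: e k) *m A *m (e i + c *: e k)) 0 0 =
  A i i + c * A i k + c^* * A k i + c^* * c * A k k.
Proof.
rewrite -(quad_e A i i) -(quad_e A i k) -(quad_e A k i) -(quad_e A k k).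
rewrite adjmxD adjmxZ !(mulmxDl, mulmxDr) -!scalemxAl -!scalemxAr !mxE; ring.
Qed.

Lemma psd_herm (A : 'M[C]_d) : psd A -> forall i k, A k i = (A i k)^*.
Proof.
move=> hA i k.
have r0 : forall z : C, 0 <= z -> z^* = z by move=> z /ger0_real; rewrite CrealE => /eqP.
have h1 := r0 _ (hA (e i + 1 *: e k)).
have h2 := r0 _ (hA (e i + 'i *: e k)).
have hi := r0 _ (hA (e i)).
have hk := r0 _ (hA (e k)).
rewrite quad_e in hi; rewrite quad_e in hk.
rewrite !quad_lin in h1 h2.
rewrite !rmorphD !rmorphM /= conjCK conjCi rmorph1 in h1 h2.
rewrite hi hk in h1 h2.
have ii : 'i * 'i = -1 :> C by rewrite -expr2 sqrCi.
have two : (2 : C) != 0 by rewrite pnatr_eq0.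
apply: (mulfI two).
have e : - 'i * 'i = 1 :> C by rewrite mulNr ii opprK.
have ci : (- 'i)^* = 'i :> C by rewrite -conjCi conjCK.
rewrite ci in h2.
move: h1 h2 ii; move: (A i i) (A k k) (A i k) (A k i) ((A i k)^*) ((A k i)^*) ('i : C).
move=> x y a b a' b' j h1 h2 ii.
have H1 : a' + b' = a + b.
  transitivity ((x + 1*a' + 1*b' + 1*1*y) - x - y); first ring.
  rewrite h1; ring.
have H2 : j * (b' - a') = j * (a - b).
  transitivity ((x + - j * a' + j * b' + j * - j * y) - x + j*j*y); first ring.
  rewrite h2; ring.
have H3 : b' - a' = a - b.
  transitivity (-j * (j*(b'-a'))); first by rewrite mulrA mulNr ii opprK mul1r.
  by rewrite H2 mulrA mulNr ii opprK mul1r.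
transitivity ((a+b)-(a-b)); first ring.
rewrite -H1 -H3; ring.
Qed.

Lemma tr_sq_gt0 (A : 'M[C]_d) : density A -> 0 < \tr (A *m A).
Proof.
case=> hA htr.
have hh := @psd_herm A hA.
have hd : forall i, 0 <= A i i.
  move=> i; have := hA (e i); by rewrite quad_e.
have le1 : \sum_i A i i * A i i <= \tr (A *m A).
  rewrite /mxtrace; apply: ler_sum => i _; rewrite mxE (bigD1 i) //=.
  apply: ler_wpDr => //; apply: sumr_ge0 => k _; rewrite (hh i k); exact: mul_conjC_ge0.
apply: lt_le_trans le1.
rewrite lt_def sumr_ge0 ?andbT; last by move=> i _; apply: mulr_ge0.
apply/negP => /eqP /psumr_eq0P H.
have : \tr A = 0.
  rewrite /mxtrace; apply: big1 => i _.
  have /eqP := H (fun i _ => mulr_ge0 (hd i) (hd i)) i isT.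
  by rewrite mulf_eq0 orbb => /eqP.
by rewrite htr => /eqP; rewrite oner_eq0.
Qed.

Lemma F2_eq (a b : 'M[C]_d) k : \tr (a *m b) = k * \tr (a *m a) ->
  \tr (b *m b) <= \tr (a *m a) -> 0 < \tr (a *m a) -> F2 a b = k.
Proof.
move=> h1 h2 h3; rewrite /F2 /= le_gtF // h1 mulfK //; exact: lt0r_neq0.
Qed.
End H.

Theorem mainTheorem10 (C : numClosedFieldType) (d n : nat)
  (rho0 : 'M[C]_d) (rho : 'I_n -> 'M[C]_d) (p : 'I_n -> C) (eps : C) :
  density rho0 ->
  (forall j, density (rho j)) ->
  (forall j, rho j *m rho0 = 0 /\ rho0 *m rho j = 0) ->
  (forall j, 0 <= p j) ->
  \sum_(j < n) p j = 1 ->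
  0 <= eps <= 1 ->
  let sigma := fun j => eps *: rho0 + (1 - eps) *: rho j in
  let rhoS := \sum_(j < n) p j *: rho j in
  let sigmaS := \sum_(j < n) p j *: sigma j in
  (forall j, \tr (sigma j *m sigma j) <= \tr (rho j *m rho j)) ->
  \tr (sigmaS *m sigmaS) <= \tr (rhoS *m rhoS) ->
  \sum_(j < n) p j * F2 (rho j) (sigma j) = F2 rhoS sigmaS /\
  F2 rhoS sigmaS = 1 - eps.
Proof.
move=> hd0 hd horth hp hp1 heps sigma rhoS sigmaS hs hS.
have hj : forall j, F2 (rho j) (sigma j) = 1 - eps.
  move=> j; apply: F2_eq; [|exact: hs|exact: tr_sq_gt0].
  rewrite /sigma mulmxDr -!scalemxAr (proj1 (horth j)) scaler0 add0r mxtraceZ //.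
have hrS : density rhoS.
  split.
    move=> x; rewrite /rhoS mulmx_sumr mulmx_suml summxE.
    apply: sumr_ge0 => j _; rewrite -scalemxAr -scalemxAl mxE.
    apply: mulr_ge0 => //; exact: (proj1 (hd j)).
  rewrite /rhoS linear_sum /=.
  by under eq_bigr do rewrite mxtraceZ (proj2 (hd _)) mulr1.
have hsig : sigmaS = eps *: rho0 + (1 - eps) *: rhoS.
  rewrite /sigmaS /sigma.
  under eq_bigr do rewrite scalerDr !scalerA.
  rewrite big_split /= -scaler_suml -mulr_suml hp1 mul1r; congr (_ + _).
  rewrite /rhoS scaler_sumr; apply: eq_bigr => j _; by rewrite scalerA mulrC.
have h0 : rhoS *m rho0 = 0.
  rewrite /rhoS mulmx_suml; apply: big1 => j _.
  by rewrite -scalemxAl (proj1 (horth j)) scaler0.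
have hF : F2 rhoS sigmaS = 1 - eps.
  apply: F2_eq => //; last exact: tr_sq_gt0.
  by rewrite hsig mulmxDr -!scalemxAr h0 scaler0 add0r mxtraceZ.
split; last exact: hF.
rewrite hF; under eq_bigr do rewrite hj.
by rewrite -mulr_suml hp1 mul1r.
Qed.
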